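(* Let $P$ and $Q$ be recurrent stochastic matrices over a countable set $\Omega$, and let $\rho$ be a *-automorphism of $\ell^\infty(\Omega)$. If there is a $\rho$-unitary isomorphism $Arv(P)\to Arv(Q)$, then $P_{ij}=Q_{\sigma_\rho(i)\sigma_\rho(j)}$ for all $i,j\in\Omega$.
   Context: A stochastic matrix over $\Omega$ has nonnegative entries and row sums $1$; $P^{(n)}_{ij}$ is the $(i,j)$ entry of $P^n$; $P$ is recurrent if $\sum_{n\ge1}P^{(n)}_{ii}=\infty$ for all $i$. $\sigma_\rho$ is the permutation of $\Omega$ with $\rho(p_j)=p_{\sigma_\rho(j)}$, $p_j$ the indicator of $\{j\}$. $Arv(P)$: $Arv(P)_0=\ell^\infty(\Omega)$; $Arv(P)_n$ ($n\ge1$) is the set of complex $\Omega\times\Omega$ matrices $A=[a_{ij}]$ with $a_{ij}=0$ whenever $P^{(n)}_{ij}=0$ and $\sup_j\sum_i|a_{ij}|^2<\infty$, a W*-correspondence over $\ell^\infty(\Omega)$ with actions by diagonal matrices and inner product $\mathrm{Diag}(A^*B)$; $U^P_{n,m}(A\otimes B)=(\sqrt{P^{n+m}})^{\flat}*[(\sqrt{P^n}*A)(\sqrt{P^m}*B)]$ for $n,m\ge1$ ($*$ entrywise product, $\sqrt\cdot$ entrywise, $M^\flat_{ik}=M_{ik}^{-1}$ if $M_{ik}>0$, else $0$), $U_{0,n},U_{n,0}$ module actions. A $\rho$-unitary isomorphism $V:Arv(P)\to Arv(Q)$ is a family $(V_n)$ with $V_0=\rho$, each $V_n$ ($n\ge1$)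 surjective linear with $V_n(a\xi b)=\rho(a)V_n(\xi)\rho(b)$ and $\rho^{-1}(\langle V_n\xi,V_n\eta\rangle)=\langle\xi,\eta\rangle$, and $V_{n+m}U^P_{n,m}=U^Q_{n,m}(V_n\otimes V_m)$. *)

(* Defs.v *)
From Stdlib Require Import Reals.
From Coquelicot Require Import Coquelicot.
From mathcomp Require Import ssreflect ssrfun ssrbool eqtype choice.

Set Implicit Arguments.
Unset Strict Implicit.

Section Defs.
Variable Om : countType.

Definition enc (f : Om -> R) (n : nat) : R :=
  match @pickle_inv Om n with Some x => f x | None => 0%R end.

(* sum over Om (used only for absolutely convergent families) *)
Definition sumR (f : Om -> R) : R := Series (enc f).
Definition sumC (f : Om -> C) : C :=
  (sumR (fun x => Re (f x)), sumR (fun x => Im (f x))).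

Definition stochastic (P : Om -> Om -> R) : Prop :=
  (forall i j, 0 <= P i j)%R /\ (forall i, is_series (enc (P i)) 1%R).

Fixpoint mpow (P : Om -> Om -> R) (n : nat) (i k : Om) : R :=
  match n with
  | O => if i == k then 1%R else 0%R
  | S n' => sumR (fun j => (mpow P n' i j * P j k)%R)
  end.

Definition recurrent (P : Om -> Om -> R) : Prop :=
  forall i, is_lim_seq (sum_n (fun n => mpow P (S n) i i)) p_infty.

Definition linfty (f : Om -> C) : Prop := exists M, forall x, (Cmod (f x) <= M)%R.

Definition star_automorphism (rho : (Om -> C) -> (Om -> C)) : Prop :=
  (forall f, linfty f -> linfty (rho f)) /\
  (forall f g, linfty f -> linfty g ->
     forall x, rho (fun y => f y + g y)%C x = (rho f x + rho g x)%C) /\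
  (forall (c : C) f, linfty f ->
     forall x, rho (fun y => c * f y)%C x = (c * rho f x)%C) /\
  (forall f g, linfty f -> linfty g ->
     forall x, rho (fun y => f y * g y)%C x = (rho f x * rho g x)%C) /\
  (forall f, linfty f ->
     forall x, rho (fun y => Cconj (f y)) x = Cconj (rho f x)) /\
  (forall f g, linfty f -> linfty g ->
     (forall x, rho f x = rho g x) -> forall x, f x = g x) /\
  (forall g, linfty g -> exists f, linfty f /\ forall x, rho f x = g x).

Definition proj (j : Om) : Om -> C := fun x => if x == j then 1%C else 0%C.

Definition Arv (P : Om -> Om -> R) (n : nat) (A : Om -> Om -> C) : Prop :=
  (forall i j, mpow P n i j = 0%R -> A i j = 0%C) /\
  (exists M, forall j N, (sum_n (enc (fun i => (Cmod (A i j) ^ 2)%R)) N <= M)%R).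

Definition inner (A B : Om -> Om -> C) : Om -> C :=
  fun j => sumC (fun i => (Cconj (A i j) * B i j)%C).

Definition flat (x : R) : R := if Rlt_dec 0 x then (/ x)%R else 0%R.

Definition Umap (P : Om -> Om -> R) (n m : nat) (A B : Om -> Om -> C) : Om -> Om -> C :=
  fun i k =>
    (RtoC (flat (sqrt (mpow P (n + m) i k))) *
     sumC (fun j => (RtoC (sqrt (mpow P n i j)) * A i j) *
                    (RtoC (sqrt (mpow P m j k)) * B j k)))%C.

(* rho-unitary isomorphism V : Arv(P) -> Arv(Q); V_0 = rho, and V n for n >= 1 *)
Definition rho_unitary_iso (P Q : Om -> Om -> R) (rho : (Om -> C) -> (Om -> C))
  (V : nat -> (Om -> Om -> C) -> (Om -> Om -> C)) : Prop :=
  (forall n, (1 <= n)%nat -> forall A, Arv P n A -> Arv Q n (V n A)) /\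
  (forall n, (1 <= n)%nat -> forall B, Arv Q n B ->
     exists A, Arv P n A /\ forall i j, V n A i j = B i j) /\
  (forall n, (1 <= n)%nat -> forall (c : C) A B, Arv P n A -> Arv P n B ->
     forall i j, V n (fun i j => A i j + c * B i j)%C i j = (V n A i j + c * V n B i j)%C) /\
  (forall n, (1 <= n)%nat -> forall a b A, linfty a -> linfty b -> Arv P n A ->
     forall i j, V n (fun i j => a i * A i j * b j)%C i j = (rho a i * V n A i j * rho b j)%C) /\
  (forall n, (1 <= n)%nat -> forall A B, Arv P n A -> Arv P n B ->
     forall j, inner (V n A) (V n B) j = rho (inner A B) j) /\
  (forall n m, (1 <= n)%nat -> (1 <= m)%nat -> forall A B, Arv P n A -> Arv P m B ->
     forall i k, V (n + m)%nat (Umap P n m A B) i k = Umap Q n m (V n A) (V m B) i k).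

End Defs.

(* Main.v *)
Require Import Defs.
From Stdlib Require Import Reals Lra Lia Classical ClassicalEpsilon FunctionalExtensionality.
From Coquelicot Require Import Coquelicot.
From mathcomp Require Import ssreflect ssrfun ssrbool eqtype choice.

Open Scope R_scope.

Lemma sum_n_mono (a : nat -> R) : (forall n, 0 <= a n) ->
  forall n m, (n <= m)%nat -> sum_n a n <= sum_n a m.
Proof.
intros Ha n m H. induction H. lra.
rewrite sum_Sn. unfold plus; simpl. specialize (Ha (S m)). lra.
Qed.

Lemma sum_n_nonneg (a : nat -> R) : (forall n, 0 <= a n) -> forall N, 0 <= sum_n a N.
Proof.
intros Ha N. induction N. rewrite sum_O. apply Ha.
rewrite sum_Sn. unfold plus; simpl. specialize (Ha (S N)). lra.
Qed.

Lemma bound_series (a : nat -> R) (B : R) : (forall n, 0 <= a n) ->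
  (forall N, sum_n a N <= B) -> ex_series a /\ Series a <= B.
Proof.
intros Ha HB.
assert (Hinc : forall n, sum_n a n <= sum_n a (S n)).
{ intro n. apply sum_n_mono; auto. }
destruct (ex_lim_seq_incr _ Hinc) as [l Hl].
assert (H1 : Rbar_le (Lim_seq (sum_n a)) (Lim_seq (fun _ => B))).
{ apply Lim_seq_le_loc. exists O. intros; auto. }
assert (H2 : Rbar_le (Lim_seq (fun _ => sum_n a O)) (Lim_seq (sum_n a))).
{ apply Lim_seq_le_loc. exists O. intros. apply sum_n_mono; [auto|lia]. }
rewrite Lim_seq_const in H1. rewrite Lim_seq_const in H2.
rewrite (is_lim_seq_unique _ _ Hl) in H1, H2.
destruct l as [r| |]; simpl in H1, H2; try contradiction.
split. exists r. exact Hl.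
unfold Series. rewrite (is_lim_seq_unique _ _ Hl). simpl. exact H1.
Qed.

Lemma partial_le (a : nat -> R) : (forall n, 0 <= a n) -> ex_series a ->
  forall N, sum_n a N <= Series a.
Proof.
intros Ha [l Hl] N.
assert (H : Rbar_le (Lim_seq (fun _ => sum_n a N)) (Lim_seq (sum_n a))).
{ apply Lim_seq_le_loc. exists N. intros. apply sum_n_mono; auto. }
rewrite Lim_seq_const in H.
unfold Series. rewrite (is_lim_seq_unique _ (Finite l) Hl) in H |- *. exact H.
Qed.

Lemma Series_nonneg (a : nat -> R) : (forall n, 0 <= a n) -> ex_series a -> 0 <= Series a.
Proof.
intros Ha Hs. eapply Rle_trans. 2: apply (partial_le a Ha Hs O).
rewrite sum_O. apply Ha.
Qed.

Section S.
Variable Om : countType.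

Lemma enc_pickle (f : Om -> R) x : enc f (pickle x) = f x.
Proof. unfold enc. by rewrite pickleK_inv. Qed.

Lemma enc_some (f : Om -> R) n (x : Om) : pickle_inv n = Some x -> n = pickle x.
Proof. intro H. have := @pickle_invK Om n. rewrite H. simpl. auto. Qed.

Lemma enc_single_eq (f : Om -> R) x0 : (forall x, x <> x0 -> f x = 0) ->
  forall n, enc f n = if Nat.eqb n (pickle x0) then f x0 else 0.
Proof.
intros Hf n. unfold enc.
destruct (pickle_inv n) as [x|] eqn:E.
- have Hn := enc_some f n x E.
  destruct (Nat.eqb n (pickle x0)) eqn:E2.
  + apply Nat.eqb_eq in E2. subst n.
    have : x = x0 by apply: (pcan_inj (@pickleK_inv Om)); congruence.
    intros ->. auto.
  + apply Hf. intros ->. rewrite Hn in E2. rewrite Nat.eqb_refl in E2. discriminate.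
- destruct (Nat.eqb n (pickle x0)) eqn:E2; auto.
  apply Nat.eqb_eq in E2. subst n. rewrite pickleK_inv in E. discriminate.
Qed.
Implicit Types f g : Om -> R.

Lemma enc_ext f g : (forall x, f x = g x) -> forall n, enc f n = enc g n.
Proof. intros H n. unfold enc. destruct (pickle_inv n); auto. Qed.

Lemma enc_nonneg f : (forall x, 0 <= f x) -> forall n, 0 <= enc f n.
Proof. intros H n. unfold enc. destruct (pickle_inv n); auto. lra. Qed.

Lemma enc_le f g : (forall x, 0 <= f x <= g x) -> forall n, 0 <= enc f n <= enc g n.
Proof. intros H n. unfold enc. destruct (pickle_inv n); auto. lra. Qed.

Lemma enc_scal f k : forall n, enc (fun x => k * f x) n = k * enc f n.
Proof. intros n. unfold enc. destruct (pickle_inv n); auto. ring. Qed.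

Lemma enc_plus f g : forall n, enc (fun x => f x + g x) n = enc f n + enc g n.
Proof. intros n. unfold enc. destruct (pickle_inv n); auto. ring. Qed.

Lemma enc_minus f g : forall n, enc (fun x => f x - g x) n = enc f n - enc g n.
Proof. intros n. unfold enc. destruct (pickle_inv n); auto. ring. Qed.

Lemma ex_enc_le f g : (forall x, 0 <= f x <= g x) -> ex_series (enc g) -> ex_series (enc f).
Proof.
intros H Hg. apply: (ex_series_le _ _ _ Hg). intro n.
have := enc_le f g H n. rewrite /norm /= /abs /=. intros. rewrite Rabs_pos_eq; lra.
Qed.

Lemma Series_enc_le f g : (forall x, 0 <= f x <= g x) -> ex_series (enc g) ->
  Series (enc f) <= Series (enc g).
Proof. intros H Hg. apply Series_le; auto. apply enc_le; auto. Qed.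

Lemma Series_enc_nonneg f : (forall x, 0 <= f x) -> ex_series (enc f) -> 0 <= Series (enc f).
Proof. intros. apply Series_nonneg; auto. apply enc_nonneg; auto. Qed.

Lemma is_series_single (v : R) m : is_series (fun n => if Nat.eqb n m then v else 0) v.
Proof.
assert (H : forall N, @eq R (sum_n (fun n => if Nat.eqb n m then v else 0) N) (if Nat.leb m N then v else 0)).
{ induction N.
  - rewrite sum_O. destruct m; simpl; auto.
  - rewrite sum_Sn IHN. change (plus ?a ?b) with (Rplus a b).
    destruct (Nat.eqb (S N) m) eqn:E.
    + apply Nat.eqb_eq in E. subst m. rewrite Nat.leb_refl.
      have -> : Nat.leb (S N) N = false by apply Nat.leb_gt; lia. ring.
    + apply Nat.eqb_neq in E. destruct (Nat.leb m N) eqn:E2.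
      * apply Nat.leb_le in E2. have -> : Nat.leb m (S N) = true by apply Nat.leb_le; lia. ring.
      * apply Nat.leb_gt in E2. have -> : Nat.leb m (S N) = false by apply Nat.leb_gt; lia. ring. }
cut (is_lim_seq (sum_n (fun n => if Nat.eqb n m then v else 0)) (Finite v)). { intro K; exact K. }
apply (is_lim_seq_ext_loc (fun _ => v)). exists m. intros n Hn. rewrite H.
have -> : Nat.leb m n = true by apply Nat.leb_le; lia. auto.
apply is_lim_seq_const.
Qed.

Lemma is_series_zero (a : nat -> R) : (forall n, a n = 0) -> is_series a 0.
Proof.
intro H. apply (is_series_ext (fun n => if Nat.eqb n O then 0 else 0)).
intro n. rewrite H. destruct (Nat.eqb n O); auto. apply is_series_single.
Qed.

Lemma sumR_zero f : (forall x, f x = 0) -> sumR f = 0.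
Proof. intro H. apply is_series_unique. apply is_series_zero. intro n. unfold enc.
destruct (pickle_inv n); auto. Qed.

Lemma is_series_enc_single f x0 : (forall x, x <> x0 -> f x = 0) -> is_series (enc f) (f x0).
Proof.
intro H. apply (is_series_ext (fun n => if Nat.eqb n (pickle x0) then f x0 else 0)).
intro n. rewrite (enc_single_eq f x0 H n). auto. apply is_series_single.
Qed.

Lemma sumR_single f x0 : (forall x, x <> x0 -> f x = 0) -> sumR f = f x0.
Proof. intro H. apply is_series_unique. by apply is_series_enc_single. Qed.

Lemma ex_enc_single f x0 : (forall x, x <> x0 -> f x = 0) -> ex_series (enc f).
Proof. intro H. exists (f x0). by apply is_series_enc_single. Qed.

Lemma sumC_single (f : Om -> C) x0 : (forall x, x <> x0 -> f x = 0%C) -> sumC f = f x0.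
Proof.
intro H. unfold sumC. rewrite (sumR_single (fun x => Re (f x)) x0).
rewrite (sumR_single (fun x => Im (f x)) x0). destruct (f x0); auto.
intros x Hx. rewrite H; auto. intros x Hx. rewrite H; auto.
Qed.

Lemma sumC_zero (f : Om -> C) : (forall x, f x = 0%C) -> sumC f = 0%C.
Proof.
intro H. unfold sumC. rewrite !sumR_zero; auto; intro x; rewrite H; auto.
Qed.

Lemma term_le_Series f : (forall x, 0 <= f x) -> ex_series (enc f) -> forall x, f x <= sumR f.
Proof.
intros Hf He x. unfold sumR. rewrite -(enc_pickle f x).
eapply Rle_trans. 2: apply (partial_le _ (enc_nonneg f Hf) He (pickle x)).
destruct (pickle x). rewrite sum_O. lra. rewrite sum_Sn. unfold plus; simpl.
have := sum_n_nonneg _ (enc_nonneg f Hf) n. lra.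
Qed.

Lemma enc_Some f n (x : Om) : pickle_inv n = Some x -> enc f n = f x.
Proof. intro H. unfold enc. by rewrite H. Qed.

Lemma enc_None f n : @pickle_inv Om n = None -> enc f n = 0.
Proof. intro H. unfold enc. by rewrite H. Qed.

Lemma sumR_ext f g : (forall x, f x = g x) -> sumR f = sumR g.
Proof. intro H. apply Series_ext. apply enc_ext. auto. Qed.

Lemma sumR_scal f k : sumR (fun x => k * f x) = k * sumR f.
Proof. unfold sumR. rewrite -Series_scal_l. apply Series_ext. apply enc_scal. Qed.

Lemma sumR_plus f g : ex_series (enc f) -> ex_series (enc g) ->
  sumR (fun x => f x + g x) = sumR f + sumR g.
Proof. intros. unfold sumR. rewrite -Series_plus; auto. apply Series_ext. apply enc_plus. Qed.

Lemma sumR_minus f g : ex_series (enc f) -> ex_series (enc g) ->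
  sumR (fun x => f x - g x) = sumR f - sumR g.
Proof. intros. unfold sumR. rewrite -Series_minus; auto. apply Series_ext. apply enc_minus. Qed.

Lemma ex_enc_scal f k : ex_series (enc f) -> ex_series (enc (fun x => k * f x)).
Proof. intro H. apply (ex_series_ext (fun n => k * enc f n)).
intro n. by rewrite enc_scal. apply: (ex_series_scal_l k). exact H. Qed.

Lemma ex_enc_plus f g : ex_series (enc f) -> ex_series (enc g) -> ex_series (enc (fun x => f x + g x)).
Proof. intros H1 H2. apply (ex_series_ext (fun n => enc f n + enc g n)).
intro n. by rewrite enc_plus. apply: (ex_series_plus _ _ H1 H2). Qed.

Lemma ex_enc_minus f g : ex_series (enc f) -> ex_series (enc g) -> ex_series (enc (fun x => f x - g x)).
Proof. intros H1 H2. apply (ex_series_ext (fun n => enc f n + (- enc g n))).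
intro n. rewrite enc_minus. reflexivity. apply: (ex_series_plus _ _ H1). apply: (ex_series_opp _ H2). Qed.

Lemma sumR_le f g : (forall x, 0 <= f x <= g x) -> ex_series (enc g) -> sumR f <= sumR g.
Proof. apply Series_enc_le. Qed.

Lemma sumR_nonneg f : (forall x, 0 <= f x) -> ex_series (enc f) -> 0 <= sumR f.
Proof. apply Series_enc_nonneg. Qed.

Lemma IL (a : Om -> R) (b : Om -> Om -> R) (c : Om -> R) (C0 : R) :
  (forall y, 0 <= a y) -> ex_series (enc a) ->
  (forall y x, 0 <= b y x) -> (forall y, ex_series (enc (b y))) ->
  (forall y, sumR (b y) <= 1) -> 0 <= C0 -> (forall x, 0 <= c x <= C0) ->
  ex_series (enc (fun x => sumR (fun y => a y * b y x) * c x)) /\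
  sumR (fun x => sumR (fun y => a y * b y x) * c x) <=
  sumR (fun y => a y * sumR (fun x => b y x * c x)).
Proof.
intros Ha Hae Hb Hbe Hb1 HC0 Hc.
have Hb1' : forall y x, b y x <= 1.
{ intros y x. eapply Rle_trans. apply term_le_Series; auto. auto. }
have Hbc : forall y x, 0 <= b y x * c x <= C0 * b y x.
{ intros y x. have := Hc x. have := Hb y x. intros. split; nra. }
have Hrow : forall y, ex_series (enc (fun x => b y x * c x)) /\ sumR (fun x => b y x * c x) <= C0.
{ intro y. have Hs : ex_series (enc (fun x => C0 * b y x)) by apply ex_enc_scal.
  split. apply: (ex_enc_le _ _ _ Hs). auto.
  eapply Rle_trans. apply sumR_le. apply Hbc. exact Hs. rewrite sumR_scal.
  have := Hb1 y. nra. }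
have Hay : forall k : Om -> R, (forall y, 0 <= k y <= C0) -> ex_series (enc (fun y => a y * k y)).
{ intros k Hk. apply: (ex_enc_le _ (fun y => C0 * a y)).
  intro y. have := Hk y. have := Ha y. intros. split; nra. by apply ex_enc_scal. }
have Hrn : forall y, 0 <= sumR (fun x => b y x * c x) <= C0.
{ intro y. split. apply sumR_nonneg. apply Hbc. apply Hrow. apply Hrow. }
pose e := fun n y => enc (fun x => b y x * c x) n.
have He : forall n y, 0 <= e n y <= C0.
{ intros n y. unfold e, enc. destruct (@pickle_inv Om n). have := Hbc y s. have := Hb1' y s. intros; nra. lra. }
have Hpe : forall N y, 0 <= sum_n (fun n => e n y) N <= C0.
{ intros N y. split. apply sum_n_nonneg. intro; apply He.
  eapply Rle_trans. apply partial_le. intro. apply enc_nonneg. apply Hbc. apply Hrow. apply Hrow. }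
have Hterm : forall n, enc (fun x => sumR (fun y => a y * b y x) * c x) n = sumR (fun y => a y * e n y).
{ intro n. destruct (@pickle_inv Om n) as [x|] eqn:E.
  - rewrite (enc_Some _ _ _ E). unfold e. symmetry.
    transitivity (sumR (fun y => c x * (a y * b y x))).
    apply sumR_ext. intro y. rewrite (enc_Some _ _ _ E). ring.
    rewrite sumR_scal. apply Rmult_comm.
  - rewrite (enc_None _ _ E). rewrite sumR_zero; auto. intro y. unfold e. rewrite (enc_None _ _ E). ring. }
have Hpart : forall N, sum_n (enc (fun x => sumR (fun y => a y * b y x) * c x)) N =
   sumR (fun y => a y * sum_n (fun n => e n y) N).
{ induction N.
  - rewrite sum_O Hterm. apply sumR_ext. intro y. by rewrite sum_O.
  - rewrite sum_Sn IHN Hterm. change (plus ?u ?v) with (Rplus u v).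
    rewrite -sumR_plus. apply sumR_ext. intro y. rewrite sum_Sn. change (plus ?u ?v) with (Rplus u v). ring.
    apply Hay. apply Hpe. apply Hay. apply He. }
have Hnn : forall x, 0 <= sumR (fun y => a y * b y x) * c x.
{ intro x. apply Rmult_le_pos. apply sumR_nonneg. intro y. apply Rmult_le_pos; auto.
  apply: (ex_enc_le _ a); auto. intro y. have := Hb y x. have := Hb1' y x. have := Ha y. intros; split; nra.
  apply Hc. }
apply bound_series. apply enc_nonneg. exact Hnn.
intro N. rewrite Hpart. apply sumR_le. 2: apply Hay; auto.
intro y. have := Hpe N y. have := Ha y. intros. split. nra.
apply Rmult_le_compat_l; auto. apply partial_le. intro; apply enc_nonneg. apply Hbc. apply Hrow.
Qed.

Definition stoch (P : Om -> Om -> R) := (forall i j, 0 <= P i j) /\ (forall i, is_series (enc (P i)) 1).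

Lemma mpow_S (P : Om -> Om -> R) n i k : mpow P (S n) i k = sumR (fun j => mpow P n i j * P j k).
Proof. reflexivity. Qed.

Lemma mpow_0 (P : Om -> Om -> R) i k : mpow P 0 i k = if i == k then 1 else 0.
Proof. reflexivity. Qed.

Section Stoch.
Variable P : Om -> Om -> R.
Hypothesis HP : stoch P.

Lemma P_nonneg i j : 0 <= P i j.
Proof. apply HP. Qed.

Lemma P_ex i : ex_series (enc (P i)).
Proof. exists 1. apply HP. Qed.

Lemma P_sum i : sumR (P i) = 1.
Proof. apply is_series_unique. apply HP. Qed.

Lemma P_le1 i j : P i j <= 1.
Proof. rewrite -(P_sum i). apply term_le_Series. apply P_nonneg. apply P_ex. Qed.

Lemma mpow_props n i : (forall j, 0 <= mpow P n i j) /\ ex_series (enc (mpow P n i)) /\ sumR (mpow P n i) <= 1.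
Proof.
revert i. induction n; intro i.
- have Hs : forall x, x <> i -> mpow P 0 i x = 0.
  { intros x Hx. rewrite mpow_0. case: eqP => // E. subst. contradiction. }
  split. intro j. rewrite mpow_0. case: eqP => _; lra.
  split. apply: ex_enc_single Hs.
  rewrite (sumR_single _ i Hs) mpow_0 eq_refl. lra.
- destruct (IHn i) as [H1 [H2 H3]].
  have := IL (mpow P n i) P (fun _ => 1) 1 H1 H2 P_nonneg P_ex (fun y => Req_le _ _ (P_sum y)) (Rle_0_1) (fun _ => conj Rle_0_1 (Rle_refl 1)).
  intros [K1 K2].
  have Hnn : forall j, 0 <= mpow P (S n) i j.
  { intro j. rewrite mpow_S. apply sumR_nonneg. intro y. apply Rmult_le_pos; auto. apply P_nonneg.
    apply: (ex_enc_le _ (mpow P n i)); auto. intro y. have := P_le1 y j. have := P_nonneg y j. have := H1 y. intros; split; nra. }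
  split. exact Hnn.
  split. apply: (ex_series_ext _ _ _ K1). intro m. apply enc_ext. intro x. rewrite Rmult_1_r. reflexivity.
  have E1 : sumR (mpow P (S n) i) = sumR (fun x => sumR (fun y => mpow P n i y * P y x) * 1).
  { apply sumR_ext. intro x. rewrite Rmult_1_r. reflexivity. }
  have E2 : sumR (fun y => mpow P n i y * sumR (fun x => P y x * 1)) = sumR (mpow P n i).
  { apply sumR_ext. intro y. rewrite (sumR_ext (fun x => P y x * 1) (P y)). rewrite P_sum. ring. intro; ring. }
  lra.
Qed.

Lemma mpow_nonneg n i j : 0 <= mpow P n i j.
Proof. apply (mpow_props n i). Qed.
Lemma mpow_ex n i : ex_series (enc (mpow P n i)).
Proof. apply (mpow_props n i). Qed.
Lemma mpow_sum n i : sumR (mpow P n i) <= 1.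
Proof. apply (mpow_props n i). Qed.
Lemma mpow_le1 n i j : mpow P n i j <= 1.
Proof. eapply Rle_trans. apply term_le_Series. apply mpow_nonneg. apply mpow_ex. apply mpow_sum. Qed.

Lemma ex_row_prod n i (g : Om -> R) : (forall l, 0 <= g l <= 1) ->
  ex_series (enc (fun l => mpow P n i l * g l)).
Proof.
intro Hg. apply: (ex_enc_le _ (mpow P n i)). intro l. have := Hg l. have := mpow_nonneg n i l.
intros; split; nra. apply mpow_ex.
Qed.

Lemma mpow1 i j : mpow P 1 i j = P i j.
Proof.
rewrite mpow_S. rewrite (sumR_single _ i). rewrite mpow_0 eq_refl. ring.
intros x Hx. rewrite mpow_0. case: eqP => E. subst; contradiction. ring.
Qed.

Lemma CK b a i j k : mpow P a i j * mpow P b j k <= mpow P (a + b) i k.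
Proof.
revert k. induction b; intro k.
- rewrite Nat.add_0_r mpow_0. case: eqP => E. subst. rewrite Rmult_1_r. apply Rle_refl.
  rewrite Rmult_0_r. apply mpow_nonneg.
- rewrite Nat.add_succ_r !mpow_S. rewrite -sumR_scal.
  apply sumR_le. 2: apply ex_row_prod; intro l; split; [apply P_nonneg|apply P_le1].
  intro l. have := IHb l. have := P_nonneg l k. have := mpow_nonneg a i j. have := mpow_nonneg b j l.
  intros H1 H2 H3 H4. have := Rmult_le_compat_r _ _ _ H3 H4. intro H5. split.
  apply Rmult_le_pos; auto. apply Rmult_le_pos; auto. rewrite -Rmult_assoc. exact H5.
Qed.

Lemma pos_decomp n i k : 0 < mpow P (S n) i k -> exists j, 0 < mpow P n i j /\ 0 < P j k.
Proof.
intro H. apply NNPP. intro Hn. rewrite mpow_S sumR_zero in H. lra.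
intro j. have := mpow_nonneg n i j. have := P_nonneg j k. intros A B.
destruct (Rle_lt_or_eq_dec _ _ A) as [A1|A1]; destruct (Rle_lt_or_eq_dec _ _ B) as [B1|B1].
- exfalso. apply Hn. exists j. split; auto.
- rewrite -B1. ring.
- rewrite -A1. ring.
- rewrite -A1. ring.
Qed.

End Stoch.

Lemma sum_shift_le (a : nat -> R) s : (forall n, 0 <= a n) ->
  forall N, sum_n (fun n => a (n + s)%nat) N <= sum_n a (N + s).
Proof.
intros Ha N. induction N.
- rewrite sum_O. simpl. destruct s. rewrite sum_O. lra. rewrite sum_Sn.
  change (plus ?u ?v) with (Rplus u v). have := sum_n_nonneg a Ha s. lra.
- rewrite Nat.add_succ_l !sum_Sn. change (plus ?u ?v) with (Rplus u v). rewrite Nat.add_succ_l. lra.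
Qed.

Lemma rec_bound (P : Om -> Om -> R) i B : recurrent P ->
  (forall N, sum_n (fun n => mpow P (S n) i i) N <= B) -> False.
Proof.
intros Hr HB. have := Hr i. intro H. apply is_lim_seq_spec in H.
destruct (H B) as [N HN]. have := HN N (le_n N). have := HB N. lra.
Qed.

Section Stoch2.
Variable P : Om -> Om -> R.
Hypothesis HP : stoch P.

Lemma ex_row_prodU n i (g : Om -> R) U : (forall l, 0 <= g l <= U) ->
  ex_series (enc (fun l => mpow P n i l * g l)).
Proof.
intro Hg. apply: (ex_enc_le _ (fun l => U * mpow P n i l)). intro l. have := Hg l. have := mpow_nonneg _ HP n i l.
intros; split; nra. apply ex_enc_scal. apply mpow_ex; auto.
Qed.

Lemma SH (u : Om -> R) U x0 delta : (forall x, 0 <= u x <= U) -> 0 <= delta ->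
  (forall y, sumR (fun x => P y x * u x) <= u y - (if y == x0 then delta else 0)) ->
  forall j N, delta * sum_n (fun n => mpow P n j x0) N <= u j.
Proof.
intros Hu Hd Hsh j.
have HU : 0 <= U by have := Hu j; lra.
pose m n := sumR (fun x => mpow P n j x * u x).
have Hm0 : forall n, 0 <= m n.
{ intro n. apply sumR_nonneg. intro x. apply Rmult_le_pos. apply mpow_nonneg; auto. apply Hu.
  apply: ex_row_prodU. exact Hu. }
have Hd0 : forall y, 0 <= u y - (if y == x0 then delta else 0).
{ intro y. eapply Rle_trans. 2: apply Hsh. apply sumR_nonneg. intro x. apply Rmult_le_pos. apply P_nonneg; auto. apply Hu.
  apply: (ex_enc_le _ (fun x => U * P y x)). intro x. have := Hu x. have := P_nonneg _ HP y x. intros; split; nra.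
  apply ex_enc_scal. apply P_ex; auto. }
have Hstep : forall n, m (S n) <= m n - delta * mpow P n j x0.
{ intro n.
  have := IL (mpow P n j) P u U (mpow_nonneg _ HP n j) (mpow_ex _ HP n j) (P_nonneg _ HP) (P_ex _ HP)
            (fun y => Req_le _ _ (P_sum _ HP y)) HU Hu. intros [_ K].
  have E1 : m (S n) = sumR (fun x => sumR (fun y => mpow P n j y * P y x) * u x) by reflexivity.
  have K2 : sumR (fun y => mpow P n j y * sumR (fun x => P y x * u x)) <=
            sumR (fun y => mpow P n j y * (u y - (if y == x0 then delta else 0))).
  { apply sumR_le. intro y. split. apply Rmult_le_pos. apply mpow_nonneg; auto.
    apply sumR_nonneg. intro x. apply Rmult_le_pos. apply P_nonneg; auto. apply Hu.
    apply: (ex_enc_le _ (fun x => U * P y x)). intro x. have := Hu x. have := P_nonneg _ HP y x. intros; split; nra.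
    apply ex_enc_scal. apply P_ex; auto.
    apply Rmult_le_compat_l. apply mpow_nonneg; auto. apply Hsh.
    apply: (ex_row_prodU _ _ _ U). intro y. split. apply Hd0. have := Hu y. case: (y == x0); lra. }
  have E3 : sumR (fun y => mpow P n j y * (u y - (if y == x0 then delta else 0))) =
            m n - delta * mpow P n j x0.
  { rewrite (sumR_ext _ (fun y => mpow P n j y * u y - mpow P n j y * (if y == x0 then delta else 0))).
    rewrite sumR_minus. rewrite (sumR_single (fun y => mpow P n j y * (if y == x0 then delta else 0)) x0).
    rewrite eq_refl. unfold m. ring.
    intros x Hx. case: eqP => E. contradiction. ring.
    apply: ex_row_prodU. exact Hu.
    apply: (ex_row_prodU _ _ _ delta). intro y. case: (y == x0); lra.
    intro y. ring. }
  lra. }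
have Hm00 : m O = u j.
{ unfold m. rewrite (sumR_single _ j). rewrite mpow_0 eq_refl. ring.
  intros x Hx. rewrite mpow_0. case: eqP => E. subst; contradiction. ring. }
have Htel : forall N, m (S N) + delta * sum_n (fun n => mpow P n j x0) N <= u j.
{ induction N.
  - rewrite sum_O. have := Hstep O. lra.
  - rewrite sum_Sn. change (plus ?a ?b) with (Rplus a b). have := Hstep (S N). lra. }
intro N. have := Htel N. have := Hm0 (S N). lra.
Qed.

End Stoch2.

Section Reach.
Variable P : Om -> Om -> R.
Hypothesis HP : stoch P.

Lemma CK_pos a b i j k : 0 < mpow P a i j -> 0 < mpow P b j k -> 0 < mpow P (a + b) i k.
Proof. intros H1 H2. eapply Rlt_le_trans. 2: apply (CK P HP b a i j k). apply Rmult_lt_0_compat; auto. Qed.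

Lemma reach_back y n k : recurrent P -> 0 < mpow P n y k -> exists p, 0 < mpow P p k y.
Proof.
intros Hrec Hyk. apply NNPP. intro HnT.
pose T x := exists p, 0 < mpow P p x y.
have Ty : T y by exists O; rewrite mpow_0 eq_refl; lra.
have Hedge : forall n k, 0 < mpow P n y k -> ~ T k ->
   exists x z q, 0 < mpow P q y x /\ T x /\ ~ T z /\ 0 < P x z.
{ clear Hyk HnT. induction n0 as [|n0 IH]; intros k0 H1 H2.
  - rewrite mpow_0 in H1. move: H1. case: eqP => E. subst. contradiction. lra.
  - destruct (pos_decomp _ HP _ _ _ H1) as [l [Hl1 Hl2]].
    destruct (classic (T l)) as [Tl|Tl].
    + exists l, k0, n0. auto.
    + apply (IH l); auto. }
destruct (Hedge n k Hyk HnT) as [x [z [q [Hq [Tx [Tz Hxz]]]]]].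
pose u w := if excluded_middle_informative (T w) then 1 else 0.
have Hu : forall w, 0 <= u w <= 1. { intro w. unfold u; cbv beta. destruct (excluded_middle_informative (T w)); simpl; simpl; lra. }
have Huz : u z = 0. { unfold u; cbv beta. destruct (excluded_middle_informative (T z)); simpl; [contradiction|auto]. }
have Hsh : forall w, sumR (fun v => P w v * u v) <= u w - (if w == x then P x z else 0).
{ intro w. destruct (classic (T w)) as [Tw|Tw].
  - have -> : u w = 1. { unfold u; cbv beta. destruct (excluded_middle_informative (T w)); simpl; [auto|contradiction]. }
    have Hg : forall v, v <> z -> (fun v => if w == x then (if v == z then P x z else 0) else 0) v = 0.
    { intros v Hv. simpl. case: (w == x) => //. case: eqP => E; [contradiction|reflexivity]. }
    eapply Rle_trans. apply (sumR_le _ (fun v => P w v - (if w == x then (if v == z then P x z else 0) else 0))).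
    { intro v. have := Hu v. have := P_nonneg _ HP w v. intros. split. nra.
      case: eqP => E1. subst w. case: eqP => E2. subst v. rewrite Huz. lra. nra. nra. }
    apply ex_enc_minus. apply P_ex; auto. apply: ex_enc_single Hg.
    rewrite sumR_minus. rewrite (P_sum _ HP). rewrite (sumR_single _ z Hg). simpl. rewrite eq_refl.
    case: (w == x); lra.
    apply P_ex; auto. apply: ex_enc_single Hg.
  - have -> : u w = 0. { unfold u; cbv beta. destruct (excluded_middle_informative (T w)); simpl; [contradiction|auto]. }
    have -> : (w == x) = false. { apply/eqP. intro E. subst. contradiction. }
    rewrite sumR_zero. lra. intro v. unfold u; cbv beta. destruct (excluded_middle_informative (T v)) as [Tv|Tv]; simpl; [|ring].
    destruct (Rle_lt_or_eq_dec _ _ (P_nonneg _ HP w v)) as [Hwv|Hwv]; [|rewrite -Hwv; ring].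
    exfalso. apply Tw. destruct Tv as [p Hp]. exists (1 + p)%nat. apply (CK_pos _ _ _ v); auto.
    rewrite mpow1; auto. }
have HS := SH _ HP u 1 x (P x z) Hu (Rlt_le _ _ Hxz) Hsh y.
have Huy : u y = 1. { unfold u; cbv beta. destruct (excluded_middle_informative (T y)); simpl; [auto|contradiction]. }
apply (rec_bound P y (/ (P x z * mpow P q y x)) Hrec).
intro N.
have Hpos : 0 < P x z * mpow P q y x by apply Rmult_lt_0_compat.
apply (Rmult_le_reg_l (P x z * mpow P q y x)). auto. rewrite Rinv_r. 2: lra.
have H1 := HS (N + S q)%nat. rewrite Huy in H1.
have H2 := sum_shift_le (fun m => mpow P m y x) (S q) (fun m => mpow_nonneg _ HP m y x) N.
have H3 : mpow P q y x * sum_n (fun n => mpow P (S n) y y) N <= sum_n (fun n => mpow P (n + S q) y x) N.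
{ have Hc : forall m, mpow P q y x * mpow P (S m) y y <= mpow P (m + S q) y x.
  { intro m. rewrite Rmult_comm. have -> : (m + S q = S m + q)%nat by lia. apply (CK _ HP). }
  clear H1 H2. induction N. rewrite !sum_O. apply Hc.
  rewrite !sum_Sn. change (plus ?a ?b) with (Rplus a b). have := Hc (S N). lra. }
have := P_nonneg _ HP x z. nra.
Qed.
End Reach.

Definition Em (i j : Om) : Om -> Om -> C := fun a b => if (a == i) && (b == j) then 1%C else 0%C.
Definition Z0 : Om -> Om -> C := fun _ _ => 0%C.

Lemma Em_Arv (P : Om -> Om -> R) n i j : mpow P n i j <> 0 -> Arv P n (Em i j).
Proof.
intro Hn. split.
- intros a b Hab. unfold Em. case: eqP => Ea; case: eqP => Eb //=. subst. contradiction.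
- exists 1. intros b N.
  have Hf : forall a, a <> i -> (fun a => Cmod (Em i j a b) ^ 2) a = 0.
  { intros a Ha. unfold Em. case: eqP => Ea //=. rewrite Cmod_0. ring. }
  eapply Rle_trans. apply partial_le. apply enc_nonneg. intro; apply pow2_ge_0.
  apply: ex_enc_single Hf. fold (sumR (fun a => Cmod (Em i j a b) ^ 2)).
  rewrite (sumR_single _ i Hf). unfold Em. rewrite eq_refl /=. case: (b == j).
  rewrite Cmod_1. lra. rewrite Cmod_0. lra.
Qed.

Lemma Z0_Arv (P : Om -> Om -> R) n : Arv P n Z0.
Proof.
split. intros; reflexivity.
exists 0. intros b N.
have Hf : forall a, (fun a => Cmod (Z0 a b) ^ 2) a = 0. { intro a. unfold Z0. rewrite Cmod_0. ring. }
eapply Rle_trans. apply partial_le. apply enc_nonneg. intro; apply pow2_ge_0.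
apply: (ex_enc_single _ b). intros; apply Hf. fold (sumR (fun a => Cmod (Z0 a b) ^ 2)).
rewrite sumR_zero; auto. lra.
Qed.

Lemma linfty_proj (j : Om) : linfty (proj j).
Proof. exists 1. intro x. unfold proj. case: (x == j). rewrite Cmod_1; lra. rewrite Cmod_0; lra. Qed.

Lemma Cmod1_of_conj (c : C) : (Cconj c * c = 1)%C -> Cmod c = 1.
Proof.
intro H. have H2 := Cmod2_conj c. rewrite Cmult_comm H in H2. apply RtoC_inj in H2.
have := Cmod_ge_0 c. intro. nra.
Qed.

Section Iso.
Variables (P Q : Om -> Om -> R) (rho : (Om -> C) -> (Om -> C)) (sigma : Om -> Om)
  (V : nat -> (Om -> Om -> C) -> (Om -> Om -> C)).
Hypothesis HP : stoch P.
Hypothesis HQ : stoch Q.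
Hypothesis Hrho : star_automorphism rho.
Hypothesis Hsig : forall j x, rho (proj j) x = proj (sigma j) x.
Hypothesis HV : rho_unitary_iso P Q rho V.

Lemma V0 n : (1 <= n)%nat -> forall a b, V n Z0 a b = 0%C.
Proof.
intros Hn a b. destruct HV as [_ [_ [H3 _]]].
have := H3 n Hn 1%C Z0 Z0 (Z0_Arv P n) (Z0_Arv P n) a b.
have -> : (fun i j => Z0 i j + 1 * Z0 i j)%C = Z0.
{ apply functional_extensionality; intro x; apply functional_extensionality; intro y. unfold Z0. ring. }
intro H. transitivity ((V n Z0 a b + 1 * V n Z0 a b) - V n Z0 a b)%C. ring. rewrite -H. ring.
Qed.

Lemma Vbimod n : (1 <= n)%nat -> forall A, Arv P n A -> forall i j a b,
  V n (fun x y => proj i x * A x y * proj j y)%C a b = (proj (sigma i) a * V n A a b * proj (sigma j) b)%C.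
Proof.
intros Hn A HA i j a b. destruct HV as [_ [_ [_ [H4 _]]]].
rewrite H4; auto. rewrite !Hsig. reflexivity. apply linfty_proj. apply linfty_proj.
Qed.

Lemma Em_eq (i j : Om) : Em i j = (fun x y => proj i x * Em i j x y * proj j y)%C.
Proof.
apply functional_extensionality; intro x; apply functional_extensionality; intro y.
unfold Em, proj. case: eqP => Ex; case: eqP => Ey /=; ring.
Qed.

Lemma proj_same (j : Om) : proj j j = 1%C.
Proof. unfold proj. by rewrite eq_refl. Qed.

Lemma proj_diff (j x : Om) : x <> j -> proj j x = 0%C.
Proof. intro H. unfold proj. case: eqP => E //. Qed.

Lemma V_supp n i j : (1 <= n)%nat -> mpow P n i j <> 0 -> forall a b,
  (a <> sigma i \/ b <> sigma j) -> V n (Em i j) a b = 0%C.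
Proof.
intros Hn Hm a b Hab. have := Vbimod n Hn (Em i j) (Em_Arv P n i j Hm) i j a b.
rewrite -Em_eq. intros ->. destruct Hab as [H|H]. rewrite (proj_diff _ _ H). ring.
rewrite (proj_diff _ _ H). ring.
Qed.

Lemma inner_Em (i j : Om) : inner (Em i j) (Em i j) = proj j.
Proof.
apply functional_extensionality; intro b. unfold inner.
destruct (eqVneq b j) as [E|E].
- subst. rewrite (sumC_single _ i). unfold Em. rewrite !eq_refl /=. rewrite proj_same.
  apply injective_projections; simpl; ring.
  intros x Hx. unfold Em. case: eqP => Ex; [contradiction|]. simpl. ring.
- rewrite proj_diff. 2: by apply/eqP. rewrite sumC_zero //. intro a. unfold Em.
  have -> : (b == j) = false by apply/negbTE. rewrite andbF. ring.
Qed.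

Lemma Vmod1 n i j : (1 <= n)%nat -> mpow P n i j <> 0 -> Cmod (V n (Em i j) (sigma i) (sigma j)) = 1.
Proof.
intros Hn Hm. destruct HV as [_ [_ [_ [_ [H5 _]]]]].
have HA := Em_Arv P n i j Hm.
have := H5 n Hn _ _ HA HA (sigma j). rewrite inner_Em Hsig proj_same.
unfold inner. rewrite (sumC_single _ (sigma i)). apply Cmod1_of_conj.
intros x Hx. rewrite (V_supp n i j Hn Hm x (sigma j)). ring. by left.
Qed.

Lemma Qpos n i j : (1 <= n)%nat -> mpow P n i j <> 0 -> mpow Q n (sigma i) (sigma j) <> 0.
Proof.
intros Hn Hm HQ0. destruct HV as [H1 _].
have HA := H1 n Hn _ (Em_Arv P n i j Hm).
have := Vmod1 n i j Hn Hm. rewrite (proj1 HA _ _ HQ0). rewrite Cmod_0. lra.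
Qed.

Lemma Ppos n i j : (1 <= n)%nat -> mpow Q n (sigma i) (sigma j) <> 0 -> mpow P n i j <> 0.
Proof.
intros Hn Hm HP0. destruct HV as [_ [H2 _]].
destruct (H2 n Hn _ (Em_Arv Q n _ _ Hm)) as [A [HA HVA]].
have := Vbimod n Hn A HA i j (sigma i) (sigma j).
rewrite HVA !proj_same. unfold Em. rewrite !eq_refl /=.
have -> : (fun x y => proj i x * A x y * proj j y)%C = Z0.
{ apply functional_extensionality; intro x; apply functional_extensionality; intro y.
  unfold Z0, proj. case: eqP => Ex; case: eqP => Ey /=; try ring. subst.
  rewrite (proj1 HA _ _ HP0). ring. }
rewrite V0 //. intro H. apply C1_nz. transitivity (1*1*1)%C. ring. by rewrite -H.
Qed.


Lemma Em_n1 (i j a b : Om) : a <> i -> Em i j a b = 0%C.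
Proof. intro H. unfold Em. have -> : (a == i) = false by apply/eqP. reflexivity. Qed.
Lemma Em_n2 (i j a b : Om) : b <> j -> Em i j a b = 0%C.
Proof. intro H. unfold Em. have -> : (b == j) = false by apply/eqP. by rewrite andbF. Qed.
Lemma Em_1 (i j : Om) : Em i j i j = 1%C.
Proof. unfold Em. by rewrite !eq_refl. Qed.

Lemma flat_sqrt x : 0 < x -> flat (sqrt x) = / sqrt x.
Proof. intro H. unfold flat. destruct (Rlt_dec 0 (sqrt x)) as [N|N]; auto. exfalso. apply N. by apply sqrt_lt_R0. Qed.

Lemma sq_ratio u v w : 0 <= u -> 0 <= v -> 0 < w -> (sqrt u * sqrt v * / sqrt w) ^ 2 = u * v / w.
Proof.
intros Hu Hv Hw. rewrite !Rpow_mult_distr pow_inv !pow2_sqrt; try lra.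
Qed.

Lemma ratio n i j k : (1 <= n)%nat -> 0 < mpow P n i j -> 0 < P j k ->
  mpow P n i j * P j k / mpow P (n + 1) i k =
  mpow Q n (sigma i) (sigma j) * Q (sigma j) (sigma k) / mpow Q (n + 1) (sigma i) (sigma k).
Proof.
intros Hn Hij Hjk.
have Hjk1 : 0 < mpow P 1 j k by rewrite mpow1.
have Hik : 0 < mpow P (n + 1) i k.
{ eapply Rlt_le_trans. 2: apply (CK P HP 1 n i j k). by apply Rmult_lt_0_compat. }
have Hn1 : (1 <= n + 1)%nat by lia.
have Qp : forall m a b, (1 <= m)%nat -> 0 < mpow P m a b -> 0 < mpow Q m (sigma a) (sigma b).
{ intros m a b Hm Hab. have := Qpos m a b Hm (Rgt_not_eq _ _ Hab). have := mpow_nonneg Q HQ m (sigma a) (sigma b). lra. }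
have qn := Qp n i j Hn Hij. have q1 := Qp 1%nat j k (le_n 1) Hjk1. have qn1 := Qp (n+1)%nat i k Hn1 Hik.
pose s := flat (sqrt (mpow P (n + 1) i k)) * (sqrt (mpow P n i j) * sqrt (mpow P 1 j k)).
have HU : Umap P n 1 (Em i j) (Em j k) = (fun a b => Z0 a b + RtoC s * Em i k a b)%C.
{ apply functional_extensionality; intro a; apply functional_extensionality; intro b.
  unfold Umap, Z0. destruct (eqVneq a i) as [Ea|Ea]; [destruct (eqVneq b k) as [Eb|Eb]|].
  - subst. rewrite (sumC_single _ j). rewrite !Em_1. unfold s. rewrite !RtoC_mult. ring.
    intros l Hl. rewrite (Em_n2 i j i l Hl). ring.
  - rewrite sumC_zero. rewrite (Em_n2 i k a b). ring. by apply/eqP.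
    intro l. rewrite (Em_n2 j k l b). ring. by apply/eqP.
  - rewrite sumC_zero. rewrite (Em_n1 i k a b). ring. by apply/eqP.
    intro l. rewrite (Em_n1 i j a l). ring. by apply/eqP. }
destruct HV as [H1 [H2 [H3 [H4 [H5 H6]]]]].
have HAij := Em_Arv P n i j (Rgt_not_eq _ _ Hij).
have HAjk := Em_Arv P 1 j k (Rgt_not_eq _ _ Hjk1).
have HAik := Em_Arv P (n+1) i k (Rgt_not_eq _ _ Hik).
have E6 := H6 n 1%nat Hn (le_n 1) _ _ HAij HAjk (sigma i) (sigma k).
rewrite HU H3 // in E6. 2: apply Z0_Arv.
rewrite V0 // in E6.
unfold Umap in E6.
rewrite (sumC_single _ (sigma j)) in E6.
2: { intros l Hl. rewrite (V_supp n i j Hn (Rgt_not_eq _ _ Hij) (sigma i) l). ring. by right. }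
rewrite Cplus_0_l in E6. apply (f_equal Cmod) in E6.
rewrite !Cmod_mult !Cmod_R in E6.
rewrite (Vmod1 (n+1) i k Hn1 (Rgt_not_eq _ _ Hik)) (Vmod1 n i j Hn (Rgt_not_eq _ _ Hij)) in E6.
rewrite (Vmod1 1 j k (le_n 1) (Rgt_not_eq _ _ Hjk1)) in E6.
unfold s in E6. rewrite !flat_sqrt in E6; auto.
have sp := sqrt_pos. 
rewrite !Rabs_pos_eq in E6; try (apply Rlt_le; apply Rinv_0_lt_compat; apply sqrt_lt_R0; auto); try apply sqrt_pos.
2: { apply Rmult_le_pos. apply Rlt_le; apply Rinv_0_lt_compat; apply sqrt_lt_R0; auto. apply Rmult_le_pos; apply sqrt_pos. }
rewrite -(mpow1 P j k) -(mpow1 Q (sigma j) (sigma k)).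
rewrite -(sq_ratio _ _ _ (mpow_nonneg P HP n i j) (mpow_nonneg P HP 1 j k) Hik).
rewrite -(sq_ratio _ _ _ (mpow_nonneg Q HQ n _ _) (mpow_nonneg Q HQ 1 _ _) qn1).
f_equal. rewrite !Rmult_1_r in E6.
transitivity (/ sqrt (mpow P (n + 1) i k) * (sqrt (mpow P n i j) * sqrt (mpow P 1 j k))). ring.
rewrite E6. ring.
Qed.
End Iso.

Lemma subseries (f : Om -> R) (sg : Om -> Om) : (forall a b, sg a = sg b -> a = b) ->
  (forall x, 0 <= f x) -> ex_series (enc f) -> sumR f <= 1 ->
  ex_series (enc (fun v => f (sg v))) /\ sumR (fun v => f (sg v)) <= 1.
Proof.
intros Hinj Hf Hfe Hf1.
pose b (x v : Om) := if sg v == x then 1 else 0.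
have Hb : forall x v, 0 <= b x v. { intros x v. unfold b. case: (sg v == x); lra. }
have Hrow : forall x, ex_series (enc (b x)) /\ sumR (b x) <= 1.
{ intro x. destruct (classic (exists v0, sg v0 = x)) as [[v0 Hv0]|N].
  - have Hs : forall v, v <> v0 -> b x v = 0.
    { intros v Hv. unfold b. case: eqP => E; [|reflexivity]. exfalso. apply Hv. apply Hinj. congruence. }
    split. apply: ex_enc_single Hs. rewrite (sumR_single _ v0 Hs). unfold b. rewrite Hv0 eq_refl. lra.
  - have Hs : forall v, b x v = 0.
    { intros v. unfold b. case: eqP => E; [|reflexivity]. exfalso. apply N. exists v. auto. }
    split. apply: (ex_enc_single _ x). intros; apply Hs. rewrite sumR_zero; auto. lra. }
have := IL f b (fun _ => 1) 1 Hf Hfe Hb (fun x => proj1 (Hrow x)) (fun x => proj2 (Hrow x)) Rle_0_1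
  (fun _ => conj Rle_0_1 (Rle_refl 1)).
intros [K1 K2].
have Eq : forall v, sumR (fun x => f x * b x v) * 1 = f (sg v).
{ intro v. rewrite Rmult_1_r (sumR_single _ (sg v)). unfold b. rewrite eq_refl. ring.
  intros x Hx. unfold b. case: eqP => E. exfalso; auto. ring. }
split.
- apply: (ex_series_ext _ _ _ K1). intro n. apply enc_ext. apply Eq.
- rewrite -(sumR_ext _ _ Eq). eapply Rle_trans. apply K2.
  eapply Rle_trans. 2: apply Hf1. apply sumR_le; auto. intro x.
  have : sumR (fun v => b x v * 1) <= 1.
  { rewrite (sumR_ext _ (b x)). apply Hrow. intro; ring. }
  have : 0 <= sumR (fun v => b x v * 1).
  { apply sumR_nonneg. intro v. have := Hb x v; lra. apply: (ex_series_ext _ _ _ (proj1 (Hrow x))).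
    intro n. apply enc_ext. intro; ring. }
  have := Hf x. intros. split; nra.
Qed.

Lemma pow_lt_mono (x y : R) n : 0 < x -> x < y -> (1 <= n)%nat -> x ^ n < y ^ n.
Proof.
intros Hx Hxy Hn. induction Hn. simpl. lra.
simpl. have := pow_lt x m Hx. intro. apply Rmult_le_0_lt_compat; lra.
Qed.

Lemma pow_inj_pos (x y : R) n : 0 < x -> 0 < y -> (1 <= n)%nat -> x ^ n = y ^ n -> x = y.
Proof.
intros Hx Hy Hn H. destruct (Rtotal_order x y) as [L|[E|L]]; auto.
have := pow_lt_mono x y n Hx L Hn. lra.
have := pow_lt_mono y x n Hy L Hn. lra.
Qed.

Lemma geom_partial (c : R) N : 0 <= c < 1 -> sum_n (fun n => c ^ (S n)) N <= / (1 - c).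
Proof.
intro Hc. have Hg : is_series (fun n => c ^ n) (/ (1 - c)).
{ apply is_series_geom. rewrite Rabs_pos_eq; lra. }
eapply Rle_trans. have := sum_shift_le (fun n => c ^ n) 1 (fun n => pow_le c n (proj1 Hc)) N.
simpl. have -> : (fun n => c ^ (n + 1)) = (fun n => c ^ S n).
{ apply functional_extensionality. intro n. f_equal. lia. }
intro H; exact H.
have <- : Series (fun n => c ^ n) = / (1 - c) by apply is_series_unique.
apply partial_le. intro n. apply pow_le. lra. eexists; exact Hg.
Qed.

Section Core.
Variables (P Q : Om -> Om -> R) (rho : (Om -> C) -> (Om -> C)) (sigma : Om -> Om)
  (V : nat -> (Om -> Om -> C) -> (Om -> Om -> C)).
Hypothesis HP : stoch P.
Hypothesis HQ : stoch Q.
Hypothesis Hrho : star_automorphism rho.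
Hypothesis Hsig : forall j x, rho (proj j) x = proj (sigma j) x.
Hypothesis HV : rho_unitary_iso P Q rho V.
Hypothesis RP : recurrent P.
Hypothesis RQ : recurrent Q.
Hypothesis Hinj : forall a b, sigma a = sigma b -> a = b.

Definition r n a b := mpow P n a b / mpow Q n (sigma a) (sigma b).

Lemma Qp n a b : (1 <= n)%nat -> 0 < mpow P n a b -> 0 < mpow Q n (sigma a) (sigma b).
Proof. intros Hn H. have := Qpos P Q rho sigma V Hsig HV n a b Hn (Rgt_not_eq _ _ H).
have := mpow_nonneg Q HQ n (sigma a) (sigma b). lra. Qed.

Lemma Pp n a b : (1 <= n)%nat -> 0 < mpow Q n (sigma a) (sigma b) -> 0 < mpow P n a b.
Proof. intros Hn H. have := Ppos P Q rho sigma V Hsig HV n a b Hn (Rgt_not_eq _ _ H).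
have := mpow_nonneg P HP n a b. lra. Qed.

Lemma r_pos n a b : (1 <= n)%nat -> 0 < mpow P n a b -> 0 < r n a b.
Proof. intros Hn H. unfold r. apply Rdiv_lt_0_compat; auto. by apply Qp. Qed.

Lemma onestep n i j k : (1 <= n)%nat -> 0 < mpow P n i j -> 0 < mpow P 1 j k ->
  0 < mpow P (n + 1) i k /\ r (n + 1) i k = r n i j * r 1 j k.
Proof.
intros Hn Hij Hjk.
have Hik : 0 < mpow P (n + 1) i k.
{ eapply Rlt_le_trans. 2: apply (CK P HP 1 n i j k). by apply Rmult_lt_0_compat. }
split; auto.
have H := ratio P Q rho sigma V HP HQ Hsig HV n i j k Hn Hij (ltac:(rewrite -(mpow1 P); exact Hjk)).
rewrite -(mpow1 P) -(mpow1 Q) in H.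
have q1 := Qp n i j Hn Hij. have q2 := Qp 1 j k (le_n 1) Hjk. have q3 := Qp (n+1) i k ltac:(lia) Hik.
unfold r. set (a := mpow P n i j) in *. set (b := mpow P 1 j k) in *. set (c := mpow P (n+1) i k) in *.
set (a' := mpow Q n (sigma i) (sigma j)) in *. set (b' := mpow Q 1 (sigma j) (sigma k)) in *.
set (c' := mpow Q (n+1) (sigma i) (sigma k)) in *. have Ha : a <> 0 by lra. have Hb : b <> 0 by lra. have Hc : c <> 0 by lra.
have Ha' : a' <> 0 by lra. have Hb' : b' <> 0 by lra. have Hc' : c' <> 0 by lra.
have H2 : a * b * c' = a' * b' * c.
{ have E1 : a * b * c' = (a*b/c) * c * c' by field.
  have E2 : a' * b' * c = (a'*b'/c') * c * c' by field.
  rewrite E1 E2 H. reflexivity. }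
transitivity (a'*b'*c / (a'*b'*c')). field; auto. rewrite -H2. field; auto.
Qed.

Lemma concat b : (1 <= b)%nat -> forall a i j k, (1 <= a)%nat -> 0 < mpow P a i j -> 0 < mpow P b j k ->
  0 < mpow P (a + b) i k /\ r (a + b) i k = r a i j * r b j k.
Proof.
intro Hb. induction Hb as [|b Hb IH]; intros a i j k Ha Hij Hjk.
- by apply onestep.
- have : 0 < mpow P (S b) j k by auto. intro H. destruct (pos_decomp P HP b j k H) as [l [Hjl Hlk]].
  destruct (IH a i j l Ha Hij Hjl) as [Hil Ril].
  have Hlk1 : 0 < mpow P 1 l k by rewrite mpow1.
  destruct (onestep (a + b) i l k ltac:(lia) Hil Hlk1) as [Hik Rik].
  destruct (onestep b j l k Hb Hjl Hlk1) as [_ Rjk].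
  have -> : (a + S b = a + b + 1)%nat by lia. split; auto.
  rewrite Rik Ril. have -> : (S b = b + 1)%nat by lia. rewrite Rjk. ring.
Qed.


Lemma loop_pow m y : (1 <= m)%nat -> 0 < mpow P m y y -> forall k, (1 <= k)%nat ->
  0 < mpow P (k * m) y y /\ r (k * m) y y = (r m y y) ^ k.
Proof.
intros Hm Hy k Hk. induction Hk as [|k Hk IH].
- rewrite Nat.mul_1_l. split; auto. ring.
- destruct IH as [IH1 IH2]. have Hkm : (1 <= k * m)%nat by nia.
  destruct (concat m Hm (k * m) y y y Hkm IH1 Hy) as [A1 A2].
  have -> : (S k * m = k * m + m)%nat by lia. split; auto. rewrite A2 IH2. simpl. ring.
Qed.

Lemma sum_le (a b : nat -> R) N : (forall n, a n <= b n) -> sum_n a N <= sum_n b N.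
Proof.
intro H. induction N. rewrite !sum_O. auto.
rewrite !sum_Sn. change (plus ?x ?z) with (Rplus x z). have := H (S N). lra.
Qed.

Lemma loop1 y N : (1 <= N)%nat -> 0 < mpow P N y y -> r N y y = 1.
Proof.
intros HN HyN.
pose b := r N y y. have bpos : 0 < b by apply r_pos.
have Key : forall n, (1 <= n)%nat -> 0 < mpow P n y y -> (r n y y) ^ N = b ^ n.
{ intros n Hn Hny. destruct (loop_pow n y Hn Hny N HN) as [_ E1].
  destruct (loop_pow N y HN HyN n Hn) as [_ E2]. rewrite -E1 -E2 Nat.mul_comm. reflexivity. }
pose c := Rpower b (/ INR N).
have cpos : 0 < c by apply exp_pos.
have HNpos : 0 < INR N by apply lt_0_INR; lia.
have cN : c ^ N = b.
{ rewrite -Rpower_pow; auto. unfold c. rewrite Rpower_mult Rinv_l. apply Rpower_1; auto. lra. }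
have rc : forall n, (1 <= n)%nat -> 0 < mpow P n y y -> r n y y = c ^ n.
{ intros n Hn Hny. apply (pow_inj_pos _ _ N); auto. apply r_pos; auto. apply pow_lt; auto.
  rewrite Key; auto. rewrite -cN -!pow_mult Nat.mul_comm. reflexivity. }
destruct (Rtotal_order b 1) as [L|[E|L]]; auto; exfalso.
- have c1 : c < 1.
  { destruct (Rlt_or_le c 1) as [H|H]; auto. have := pow_R1_Rle c N H. lra. }
  apply (rec_bound P y (/ (1 - c)) RP). intro M.
  eapply Rle_trans. 2: apply (geom_partial c M); lra.
  apply sum_le. intro n.
  destruct (Rle_lt_or_eq_dec _ _ (mpow_nonneg P HP (S n) y y)) as [H|H].
  + rewrite -(rc (S n)); auto; try lia. unfold r.
    have q := Qp (S n) y y ltac:(lia) H. have := mpow_le1 Q HQ (S n) (sigma y) (sigma y).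
    intro. unfold Rdiv. rewrite -{1}(Rmult_1_r (mpow P (S n) y y)).
    apply Rmult_le_compat_l. lra. rewrite -Rinv_1. apply Rinv_le_contravar; lra.
  + rewrite -H. apply pow_le. lra.
- have c1 : 1 < c.
  { destruct (Rlt_or_le 1 c) as [H|H]; auto. have := pow_incr c 1 N (conj (Rlt_le _ _ cpos) H).
    rewrite pow1. lra. }
  pose d := / c. have d1 : 0 < d < 1.
  { split. apply Rinv_0_lt_compat; auto. rewrite -Rinv_1. apply Rinv_lt_contravar; lra. }
  apply (rec_bound Q (sigma y) (/ (1 - d)) RQ). intro M.
  eapply Rle_trans. 2: apply (geom_partial d M); lra.
  apply sum_le. intro n.
  destruct (Rle_lt_or_eq_dec _ _ (mpow_nonneg Q HQ (S n) (sigma y) (sigma y))) as [H|H].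
  + have p := Pp (S n) y y ltac:(lia) H. have Hr := rc (S n) ltac:(lia) p.
    unfold r in Hr. have := mpow_le1 P HP (S n) y y. intro Hle.
    have Hq : mpow Q (S n) (sigma y) (sigma y) = mpow P (S n) y y / c ^ (S n).
    { rewrite -Hr. field. split; lra. }
    rewrite Hq. unfold d. rewrite pow_inv. unfold Rdiv.
    rewrite -{2}(Rmult_1_l (/ c ^ S n)). apply Rmult_le_compat_r; auto.
    apply Rlt_le. apply Rinv_0_lt_compat. apply pow_lt; lra.
  + rewrite -H. apply pow_le. lra.
Qed.


Definition Cl y x := exists n, (1 <= n)%nat /\ 0 < mpow P n y x.

Lemma Cl_self y : Cl y y.
Proof.
apply NNPP. intro H. apply (rec_bound P y 0 RP). intro M.
have -> : 0 = sum_n (fun _ => 0) M. { induction M. by rewrite sum_O. rewrite sum_Sn -IHM. change (plus ?a ?b) with (Rplus a b). ring. }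
apply sum_le. intro n. destruct (Rle_lt_or_eq_dec _ _ (mpow_nonneg P HP (S n) y y)) as [L|E].
exfalso. apply H. exists (S n). split; auto. lia. lra.
Qed.

Lemma wd y x n m : (1 <= n)%nat -> (1 <= m)%nat -> 0 < mpow P n y x -> 0 < mpow P m y x ->
  r n y x = r m y x.
Proof.
intros Hn Hm Hx1 Hx2. destruct (reach_back P HP y n x RP Hx1) as [p Hp].
destruct p as [|p].
- rewrite mpow_0 in Hp. move: Hp. case: eqP => E; [|lra]. intros _. subst.
  rewrite !loop1 //.
- destruct (concat (S p) ltac:(lia) n y x y Hn Hx1 Hp) as [A1 A2].
  destruct (concat (S p) ltac:(lia) m y x y Hm Hx2 Hp) as [B1 B2].
  rewrite loop1 in A2; try lia; auto. rewrite loop1 in B2; try lia; auto.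
  have := r_pos (S p) x y ltac:(lia) Hp. intro. 
  apply (Rmult_eq_reg_r (r (S p) x y)). 2: lra. lra.
Qed.

Definition h y x : R :=
  match excluded_middle_informative (Cl y x) with
  | left H => r (proj1_sig (constructive_indefinite_description _ H)) y x
  | right _ => 1 end.

Lemma h_val y x n : (1 <= n)%nat -> 0 < mpow P n y x -> h y x = r n y x.
Proof.
intros Hn Hx. unfold h. destruct (excluded_middle_informative (Cl y x)) as [H|H].
- destruct (constructive_indefinite_description _ H) as [m [Hm1 Hm2]]. simpl. apply wd; auto.
- exfalso. apply H. exists n. auto.
Qed.

Lemma h_pos y x : 0 < h y x.
Proof.
unfold h. destruct (excluded_middle_informative (Cl y x)) as [H|H].
- destruct (constructive_indefinite_description _ H) as [m [Hm1 Hm2]]. simpl. by apply r_pos.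
- lra.
Qed.


Lemma Qrow w : ex_series (enc (fun v => Q (sigma w) (sigma v))) /\ sumR (fun v => Q (sigma w) (sigma v)) <= 1.
Proof.
apply subseries; auto. intro; apply P_nonneg; auto. apply P_ex; auto. rewrite P_sum; auto. lra.
Qed.

Lemma r1_eq w v : 0 < P w v -> P w v / r 1 w v = Q (sigma w) (sigma v).
Proof.
intro H. have q := Qp 1 w v (le_n 1) ltac:(rewrite mpow1; exact H). rewrite !mpow1 in q.
unfold r. rewrite !mpow1. field. lra.
Qed.

Lemma h_step y w v : Cl y w -> 0 < P w v -> Cl y v /\ h y v = h y w * r 1 w v.
Proof.
intros [n [Hn Hw]] Hv. have Hv1 : 0 < mpow P 1 w v by rewrite mpow1.
destruct (onestep n y w v Hn Hw Hv1) as [A1 A2]. split.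
exists (n + 1)%nat. split; auto. lia.
rewrite (h_val y v (n+1)) //. rewrite (h_val y w n) //. lia.
Qed.

Lemma edgeB y k : 0 < P y k -> r 1 y k <= 1.
Proof.
intro Hyk. apply Rnot_lt_le. intro Hr.
have Hk1 : 0 < mpow P 1 y k by rewrite mpow1.
have hyy : h y y = 1.
{ destruct (Cl_self y) as [N [HN HyN]]. rewrite (h_val y y N) //. by apply loop1. }
have hyk : h y k = r 1 y k by apply h_val.
pose u x := if excluded_middle_informative (Cl y x) then Rmin (/ h y x) 1 else 1.
have Hu : forall x, 0 <= u x <= 1.
{ intro x. unfold u. destruct (excluded_middle_informative (Cl y x)); simpl.
  have := h_pos y x. intro. split. apply Rmin_glb. apply Rlt_le. by apply Rinv_0_lt_compat. lra.
  apply Rmin_r. lra. }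
have HuC : forall x, Cl y x -> u x <= / h y x.
{ intros x Hx. unfold u. destruct (excluded_middle_informative (Cl y x)); simpl. apply Rmin_l. contradiction. }
have Huy : u y = 1.
{ unfold u. destruct (excluded_middle_informative (Cl y y)); simpl; auto. rewrite hyy Rinv_1.
  apply Rmin_left; lra. }
have hk1 : / h y k < 1. { rewrite hyk -Rinv_1. apply Rinv_lt_contravar; lra. }
pose delta := P y k * (1 - / h y k).
have Hdel : 0 < delta by apply Rmult_lt_0_compat; lra.
have Hsh : forall w, sumR (fun v => P w v * u v) <= u w - (if w == y then delta else 0).
{ intro w. destruct (eqVneq w y) as [E|E].
  - subst w. rewrite Huy.
    have Hs : forall v, v <> k -> (fun v => if v == k then delta else 0) v = 0.
    { intros v Hv. simpl. case: eqP => // E. }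
    eapply Rle_trans. apply (sumR_le _ (fun v => P y v - (if v == k then delta else 0))).
    { intro v. have := Hu v. have := P_nonneg P HP y v. intros. split. nra.
      case: eqP => Ev. subst v. have := HuC k ltac:(exists 1%nat; auto). unfold delta. intro. nra. nra. }
    apply ex_enc_minus. apply P_ex; auto. apply: ex_enc_single Hs.
    rewrite sumR_minus. rewrite (P_sum P HP). rewrite (sumR_single _ k Hs). simpl. rewrite eq_refl. lra.
    apply P_ex; auto. apply: ex_enc_single Hs.
  - rewrite Rminus_0_r.
    have B1 : sumR (fun v => P w v * u v) <= 1.
    { rewrite -(P_sum P HP w). apply sumR_le. intro v. have := Hu v. have := P_nonneg P HP w v. intros; split; nra.
      apply P_ex; auto. }
    destruct (classic (Cl y w)) as [Cw|Cw].
    + have Hw : u w = Rmin (/ h y w) 1.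
      { unfold u. destruct (excluded_middle_informative (Cl y w)); simpl; auto. contradiction. }
      rewrite Hw. apply Rmin_glb; auto.
      have hw := h_pos y w.
      eapply Rle_trans. apply (sumR_le _ (fun v => / h y w * Q (sigma w) (sigma v))).
      { intro v. have := Hu v. have := P_nonneg P HP w v. intros A B. split. nra.
        destruct (Rle_lt_or_eq_dec _ _ A) as [A1|A1].
        - destruct (h_step y w v Cw A1) as [Cv Hv].
          have := HuC v Cv. rewrite Hv. intro Hle.
          rewrite -(r1_eq w v A1). have := r_pos 1 w v (le_n 1) ltac:(rewrite mpow1; exact A1). intro rp.
          eapply Rle_trans. apply Rmult_le_compat_l. lra. exact Hle. apply Req_le. field. lra.
        - rewrite -A1. have := P_nonneg Q HQ (sigma w) (sigma v). have := Rinv_0_lt_compat _ hw. intros; nra. }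
      apply ex_enc_scal. apply Qrow.
      rewrite sumR_scal. have := Qrow w. intros [_ Q1]. have := Rinv_0_lt_compat _ hw. intros. 
      rewrite -{2}(Rmult_1_r (/ h y w)). apply Rmult_le_compat_l; lra.
    + have Hw : u w = 1.
      { unfold u. destruct (excluded_middle_informative (Cl y w)); simpl; auto. contradiction. }
      rewrite Hw. exact B1. }
have HS := SH P HP u 1 y delta Hu (Rlt_le _ _ Hdel) Hsh y.
apply (rec_bound P y (/ delta) RP). intro M.
apply (Rmult_le_reg_l delta); auto. rewrite Rinv_r. 2: lra.
have := HS (M + 1)%nat. rewrite Huy. intro H1.
have H2 := sum_shift_le (fun m => mpow P m y y) 1 (fun m => mpow_nonneg P HP m y y) M.
have -> : (fun n => mpow P (S n) y y) = (fun n => mpow P (n + 1) y y).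
{ apply functional_extensionality. intro n. f_equal. lia. }
nra.
Qed.

Lemma edge1 y k : 0 < P y k -> r 1 y k = 1.
Proof.
intro Hyk. destruct (Rle_lt_or_eq_dec _ _ (edgeB y k Hyk)) as [L|E]; auto. exfalso.
have rp := r_pos 1 y k (le_n 1) ltac:(rewrite mpow1; exact Hyk).
pose eps := P y k * (/ r 1 y k - 1).
have He : 0 < eps.
{ apply Rmult_lt_0_compat; auto. have : 1 < / r 1 y k. rewrite -Rinv_1. apply Rinv_lt_contravar; lra. lra. }
have Hs : forall v, v <> k -> (fun v => if v == k then eps else 0) v = 0.
{ intros v Hv. simpl. case: eqP => // E. }
destruct (Qrow y) as [Qe Q1].
have : sumR (fun v => P y v + (if v == k then eps else 0)) <= sumR (fun v => Q (sigma y) (sigma v)).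
{ apply sumR_le; auto. intro v. have := P_nonneg P HP y v. intro A. split.
  case: (v == k); lra.
  destruct (Rle_lt_or_eq_dec _ _ A) as [A1|A1].
  - rewrite -(r1_eq y v A1). have rv := edgeB y v A1. have rvp := r_pos 1 y v (le_n 1) ltac:(rewrite mpow1; exact A1).
    case: eqP => Ev.
    + subst v. unfold eps. apply Req_le. field. lra.
    + rewrite Rplus_0_r. unfold Rdiv. rewrite -{1}(Rmult_1_r (P y v)). apply Rmult_le_compat_l. lra.
      rewrite -Rinv_1. apply Rinv_le_contravar; lra.
  - rewrite -A1. case: eqP => Ev. subst v. lra. have := P_nonneg Q HQ (sigma y) (sigma v). lra. }
rewrite sumR_plus. rewrite (P_sum P HP) (sumR_single _ k Hs). simpl. rewrite eq_refl. lra.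
apply P_ex; auto. apply: ex_enc_single Hs.
Qed.


Lemma final i j : P i j = Q (sigma i) (sigma j).
Proof.
destruct (Rle_lt_or_eq_dec _ _ (P_nonneg P HP i j)) as [L|E].
- have := edge1 i j L. have q := Qp 1 i j (le_n 1) ltac:(rewrite mpow1; exact L).
  rewrite mpow1 in q. unfold r. rewrite !mpow1. intro H.
  apply (Rmult_eq_reg_r (/ Q (sigma i) (sigma j))). rewrite Rinv_r. exact H. lra.
  apply Rgt_not_eq. apply Rinv_0_lt_compat. lra.
- rewrite -E. destruct (Rle_lt_or_eq_dec _ _ (P_nonneg Q HQ (sigma i) (sigma j))) as [L|E2]; auto.
  have := Pp 1 i j (le_n 1) ltac:(rewrite mpow1; exact L). rewrite mpow1. lra.
Qed.
End Core.
End S.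

Theorem mainTheorem9 (Om : countType) (P Q : Om -> Om -> R)
  (rho : (Om -> C) -> (Om -> C)) (sigma : Om -> Om) :
  stochastic P -> stochastic Q -> recurrent P -> recurrent Q ->
  star_automorphism rho ->
  (forall j x, rho (proj j) x = proj (sigma j) x) ->
  (exists V, rho_unitary_iso P Q rho V) ->
  forall i j, P i j = Q (sigma i) (sigma j).
Proof.
intros HP HQ RP RQ Hrho Hsig [V HV] i j.
have Hinj : forall a b, sigma a = sigma b -> a = b.
{ intros a b Hab. destruct Hrho as [_ [_ [_ [_ [_ [Hinjr _]]]]]].
  have := Hinjr (proj a) (proj b) (linfty_proj Om a) (linfty_proj Om b).
  intro K. have := K ltac:(intro x; rewrite !Hsig Hab; reflexivity) a.
  rewrite proj_same. unfold proj. case: eqP => // E. intro H. exfalso. by apply C1_nz. }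
apply (final Om P Q rho sigma V); auto.
Qed.
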